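(* Let $k$ be an algebraically closed field of characteristic zero, $A=k[x,y]$, $\mathfrak m=(x,y)$. Let $M$ be an $A$-module of length $n\geq 3$ supported at $\mathfrak m$ whose minimal number of generators $r_M=\dim_k M/\mathfrak m M$ equals $n-1$. Then $M\cong k^{n-3}\oplus N$, where $k=A/\mathfrak m$ and $N$ is an $A$-module of length $3$ (supported at $\mathfrak m$) with $r_N=2$. *)

(* Defs.v *)
From HB Require Import structures.
From mathcomp Require Import all_boot all_order all_algebra.
Set Implicit Arguments. Unset Strict Implicit. Unset Printing Implicit Defensive.
Import Order.TTheory GRing.Theory Num.Theory.
Local Open Scope ring_scope.

(* A module M over A = k[x,y] of finite length n supported at m = (x,y) is
   encoded (as usual) by the k-vector space k^n (row vectors) together with
   the actions of x and y, i.e. two matrices X, Y (v |-> v *m X, v |-> v *m Y)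
   which commute (A is commutative) and are nilpotent (M is supported at m,
   i.e. killed by a power of m).  Its length equals its k-dimension n. *)
Definition fin_mod_at_m (k : fieldType) (n : nat) (X Y : 'M[k]_n) : Prop :=
  X *m Y = Y *m X /\ (exists j : nat, X ^+ j = 0) /\ (exists j : nat, Y ^+ j = 0).

(* r_M = dim_k M / mM, where mM = xM + yM is the sum of the row spaces of X and Y. *)
Definition min_gens (k : fieldType) (n : nat) (X Y : 'M[k]_n) : nat :=
  (n - \rank (X + Y)%MS)%N.

(* Main.v *)
From HB Require Import structures.
From mathcomp Require Import all_boot all_order all_algebra.
Require Import Defs.
From mathcomp Require Import zify.
Import Order.TTheory GRing.Theory Num.Theory.
Local Open Scope ring_scope.


Lemma ext_rank (k : fieldType) (n d : nat) (U : 'M[k]_n) : (\rank U + d <= n)%N ->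
  exists V : 'M[k]_n, (U <= V)%MS /\ \rank V = (\rank U + d)%N.
Proof.
elim: d U => [|d IH] U hU.
  by exists U; rewrite addn0 submx_refl.
have hlt : (\rank U < n)%N by apply: leq_trans hU; rewrite addnS ltnS leq_addr.
have : ~~ (1%:M <= U)%MS.
  apply/negP => h; move: (mxrankS h); rewrite mxrank1 => h2.
  by move: hlt; rewrite ltnNge h2.
case/row_subPn => i hi.
set v := row i (1%:M : 'M[k]_n).
have hr : \rank (U + v)%MS = (\rank U).+1.
  apply/eqP; rewrite eqn_leq; apply/andP; split.
    apply: leq_trans (mxrank_adds_leqif U v) _.
    by rewrite -(addn1 (\rank U)) leq_add2l rank_rV leq_b1.
  apply: rank_ltmx; rewrite ltmxE addsmxSl /=.
  apply/negP => h; move/negP: hi; apply.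
  exact: submx_trans (addsmxSr U v) h.
have hU1 : (\rank (U + v)%MS + d <= n)%N by rewrite hr addSnnS.
have [V [sV rV]] := IH (U + v)%MS hU1.
by exists V; split; [exact: submx_trans (addsmxSl U v) sV | rewrite rV hr addSnnS].
Qed.

Lemma choose_free (k : fieldType) (m n r : nat) (V : 'M[k]_(m, n)) : \rank V = r ->
  exists N : 'M[k]_(r, n), row_free N /\ (N == V)%MS.
Proof.
move=> <-; exists (row_base V); split; first exact: row_base_free.
exact/eqmxP/eq_row_base.
Qed.

Lemma main_p (k : fieldType) (p : nat) (X Y : 'M[k]_(p + 3)) :
  fin_mod_at_m X Y -> \rank (X + Y)%MS = 1%N ->
  exists (P : 'M[k]_(p + 3)) (X' Y' : 'M[k]_3),
    [/\ P \in unitmx, fin_mod_at_m X' Y', min_gens X' Y' = 2%N,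
        invmx P *m X *m P = block_mx 0 0 0 X' &
        invmx P *m Y *m P = block_mx 0 0 0 Y'].
Proof.
move=> [hc [[jx hx] [jy hy]]] hr.
pose L := row_mx X Y.
pose K0 := kermx L.
have hK0 m (v : 'M[k]_(m, p + 3)) : (v <= K0)%MS = (v *m X == 0) && (v *m Y == 0).
  by rewrite sub_kermx mul_mx_row row_mx_eq0.
have rX : (\rank X <= 1)%N by have := mxrankS (addsmxSl X Y); rewrite hr.
have rY : (\rank Y <= 1)%N by have := mxrankS (addsmxSr X Y); rewrite hr.
have rL : (\rank L <= 2)%N.
  rewrite -mxrank_tr tr_row_mx -addsmxE.
  apply: leq_trans (mxrank_adds_leqif _ _) _.
  by rewrite !mxrank_tr (leq_add rX rY).
have rC : \rank K0^C = \rank L.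
  by rewrite mxrank_compl mxrank_ker subKn // rank_leq_row.
pose W := (X + Y)%MS.
pose U := (W + K0^C)%MS.
have rU : (\rank U <= 3)%N.
  apply: leq_trans (mxrank_adds_leqif _ _) _.
  by rewrite hr rC (leq_add (leqnn 1) rL).
have hU3 : (\rank U + (3 - \rank U) <= p + 3)%N by rewrite subnKC // addnC leq_addr.
have [V [sUV rV]] := @ext_rank _ _ _ _ hU3.
rewrite subnKC // in rV.
have [N [Nfree eqN]] := @choose_free _ _ _ _ _ rV.
have sUN : (U <= N)%MS by rewrite (eqmxP eqN).
have sWN : (W <= N)%MS := submx_trans (addsmxSl _ _) sUN.
have sCN : (K0^C <= N)%MS := submx_trans (addsmxSr _ _) sUN.
have full1 : (1%:M <= N + K0)%MS.
  have h1 : (1%:M <= K0 + K0^C)%MS by rewrite sub1mx addsmx_compl_full.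
  by apply: submx_trans h1 _; rewrite addsmxC addsmxS.
pose Kd := (K0 :\: N)%MS.
have full2 : (1%:M <= Kd + N)%MS.
  apply: submx_trans full1 _; rewrite addsmx_sub addsmxSr /=.
  rewrite -{1}(addsmx_diff_cap_eq K0 N) addsmx_sub addsmxSl /=.
  exact: submx_trans (capmxSr _ _) (addsmxSr _ _).
have rN : \rank N = 3%N by apply/eqP.
have rKd : \rank Kd = p.
  have := mxrank_disjoint_sum (capmx_diff K0 N).
  move: full2; rewrite sub1mx /row_full => /eqP -> .
  by rewrite rN => /eqP; rewrite eqn_add2r => /eqP.
have [K' [K'free eqK']] := @choose_free _ _ _ _ _ rKd.
have sK'0 : (K' <= K0)%MS by rewrite (eqmxP eqK') diffmxSl.
have sXN : (N *m X <= N)%MS.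
  apply: submx_trans (submxMl _ _) _; exact: submx_trans (addsmxSl X Y) sWN.
have sYN : (N *m Y <= N)%MS.
  apply: submx_trans (submxMl _ _) _; exact: submx_trans (addsmxSr X Y) sWN.
pose X' := N *m X *m pinvmx N.
pose Y' := N *m Y *m pinvmx N.
have hNX : X' *m N = N *m X by rewrite mulmxKpV.
have hNY : Y' *m N = N *m Y by rewrite mulmxKpV.
clearbody X' Y'.
pose Q := col_mx K' N.
have hQ : Q \in unitmx.
  rewrite -row_full_unit -sub1mx -addsmxE.
  apply: submx_trans full2 _; apply: addsmxS => //.
  by rewrite (eqmxP eqK').
have hKX : K' *m X = 0 by move: sK'0; rewrite hK0 => /andP[/eqP].
have hKY : K' *m Y = 0 by move: sK'0; rewrite hK0 => /andP[_ /eqP].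
have hpow (A : 'M[k]_(p + 3)) (A' : 'M[k]_3) j :
    A' *m N = N *m A -> A' ^+ j *m N = N *m A ^+ j.
  move=> h; elim: j => [|j IH]; first by rewrite !expr0 mul1mx mulmx1.
  by rewrite !exprSr -!mulmxE -mulmxA h mulmxA IH -mulmxA.
have hrk : \rank (X' + Y')%MS = 1%N.
  have -> : \rank (X' + Y')%MS = \rank (N *m X + N *m Y)%MS.
    by rewrite !addsmxE -(mxrankMfree _ Nfree) mul_col_mx hNX hNY.
  apply/eqP; rewrite eqn_leq; apply/andP; split.
    by have := mxrankS (addsmxS (submxMl N X) (submxMl N Y)); rewrite hr.
  rewrite lt0n; apply/negP; rewrite mxrank_eq0 => /eqP h0.
  have hNX0 : N *m X = 0 by apply/eqP; rewrite -submx0 -h0 addsmxSl.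
  have hNY0 : N *m Y = 0 by apply/eqP; rewrite -submx0 -h0 addsmxSr.
  have : (1%:M <= K0)%MS.
    apply: submx_trans full1 _.
    by rewrite addsmx_sub submx_refl andbT hK0 hNX0 hNY0 eqxx.
  rewrite hK0 !mul1mx => /andP[/eqP X0 /eqP Y0].
  by move: hr; rewrite X0 Y0 addsmx0 mxrank0.
exists (invmx Q), X', Y'; rewrite invmxK; split.
- by rewrite unitmx_inv.
- split; last split.
  + apply: (row_free_inj Nfree) => /=.
    by rewrite -!mulmxA hNY hNX !mulmxA hNX hNY -!mulmxA hc.
  + exists jx; apply: (row_free_inj Nfree) => /=.
    by rewrite (hpow X) // mul0mx hx mulmx0.
  + exists jy; apply: (row_free_inj Nfree) => /=.
    by rewrite (hpow Y) // mul0mx hy mulmx0.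
- by rewrite /min_gens hrk.
- have -> : Q *m X = block_mx 0 0 0 X' *m Q.
    by rewrite mul_col_mx mul_block_col !mul0mx !add0r hKX hNX.
  by rewrite mulmxK.
- have -> : Q *m Y = block_mx 0 0 0 Y' *m Q.
    by rewrite mul_col_mx mul_block_col !mul0mx !add0r hKY hNY.
  by rewrite mulmxK.
Qed.

Lemma main_n (k : fieldType) p n (e : (p + 3 = n)%N) (X Y : 'M[k]_n) :
  fin_mod_at_m X Y -> \rank (X + Y)%MS = 1%N ->
  exists (P : 'M[k]_n) (X' Y' : 'M[k]_3),
    [/\ P \in unitmx, fin_mod_at_m X' Y', min_gens X' Y' = 2%N,
        invmx P *m X *m P = castmx (e, e) (block_mx 0 0 0 X') &
        invmx P *m Y *m P = castmx (e, e) (block_mx 0 0 0 Y')].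
Proof.
case: n / e X Y => X Y hf hr.
have [P [X' [Y' [h1 h2 h3 h4 h5]]]] := @main_p _ _ _ _ hf hr.
by exists P, X', Y'; rewrite !castmx_id.
Qed.

Theorem proposition2p3 (k : closedFieldType) (hk : [pchar k] =i pred0)
    (n : nat) (h3 : (3 <= n)%N) (X Y : 'M[k]_n) :
  fin_mod_at_m X Y -> min_gens X Y = n.-1 ->
  exists (P : 'M[k]_n) (X' Y' : 'M[k]_3),
    [/\ P \in unitmx,
        fin_mod_at_m X' Y',
        min_gens X' Y' = 2%N,
        invmx P *m X *m P = castmx (subnK h3, subnK h3) (block_mx 0 0 0 X') &
        invmx P *m Y *m P = castmx (subnK h3, subnK h3) (block_mx 0 0 0 Y')].
Proof.
move=> hf hm; apply: (@main_n _ _ _ _ _ _ hf).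
have hle := rank_leq_row (X + Y)%MS.
move: hm; rewrite /min_gens => hm.
lia.
Qed.
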